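(* For every odd integer $d\ge 3$ there exists a generalized bicycle code with parameters $[[d^2+1,2,d]]$ which is $(2,4)$-regular. Moreover, for every such $d$ except $d=3$, this code is degenerate, having non-identity stabilizers of weight $4<d$.
   Context: For $a(x),b(x)\in R_n=\mathbb{F}_2[x]/\langle x^n-1\rangle$, the generalized bicycle (GB) code is the CSS code on $2n$ qubits whose X-check matrix $H_X$ has rows $x^i(a(x),b(x))$, $0\le i\le n-1$, and whose Z-check matrix $H_Z$ has rows $x^i(b(x^{-1}),a(x^{-1}))$ (vectors of $\mathbb{F}_2^{2n}$ written as pairs of polynomials, $x^{-1}=x^{n-1}$); its dimension is $2n-\mathrm{rank}H_X-\mathrm{rank}H_Z$ and its minimum distance is the minimum weight of a Pauli operator commuting with all stabilizers but not in the stabilizer group. The code is $(2,4)$-regular if every row of $H_X$ and $H_Z$ has weight 4 and every column has weight 2. A code of minimum distance $d$ is degenerate if its stabilizer group contains a non-identity element of weight less than $d$. $[[N,K,D]]$: $N$ physical qubits, $K$ logical qubits, distance $D$. *)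

(* Defs.v *)
From HB Require Import structures.
From mathcomp Require Import all_boot all_order all_algebra.
Set Implicit Arguments. Unset Strict Implicit. Unset Printing Implicit Defensive.
Import GRing.Theory.
Local Open Scope ring_scope.

Definition polyrow (n : nat) (p : {poly 'F_2}) : 'rV['F_2]_n :=
  \row_(j < n) (p %% ('X^n - 1))`_j.

(* x^{-1} = x^{n-1} in R_n : p(x^{-1}) is represented by p \Po x^(n-1). *)
Definition polyinv (n : nat) (p : {poly 'F_2}) : {poly 'F_2} :=
  p \Po 'X^(n.-1).

Definition GB_mx (n : nat) (a b : {poly 'F_2}) : 'M['F_2]_(n, n + n) :=
  \matrix_(i < n) row_mx (polyrow n ('X^i * a)) (polyrow n ('X^i * b)).

Definition GB_HX (n : nat) (a b : {poly 'F_2}) : 'M['F_2]_(n, n + n) :=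
  GB_mx n a b.

Definition GB_HZ (n : nat) (a b : {poly 'F_2}) : 'M['F_2]_(n, n + n) :=
  GB_mx n (polyinv n b) (polyinv n a).

Definition hwt (N : nat) (v : 'rV['F_2]_N) : nat := #|[set j | v 0 j != 0]|.

(* A Pauli operator on N qubits up to phase: X^u Z^v. Its weight is the
   number of qubits on which it acts non-trivially. *)
Definition pauli_wt (N : nat) (u v : 'rV['F_2]_N) : nat :=
  #|[set j | (u 0 j != 0) || (v 0 j != 0)]|.

(* CSS code with X-checks HX (X-type stabilizers X^h, h row of HX) and
   Z-checks HZ (Z-type stabilizers Z^g, g row of HZ). *)

Definition css_commutes (m1 m2 N : nat) (HX : 'M['F_2]_(m1, N))
  (HZ : 'M['F_2]_(m2, N)) (u v : 'rV['F_2]_N) : bool :=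
  (HZ *m u^T == 0) && (HX *m v^T == 0).

Definition css_in_stab (m1 m2 N : nat) (HX : 'M['F_2]_(m1, N))
  (HZ : 'M['F_2]_(m2, N)) (u v : 'rV['F_2]_N) : bool :=
  (u <= HX)%MS && (v <= HZ)%MS.

Definition css_dim (m1 m2 N : nat) (HX : 'M['F_2]_(m1, N))
  (HZ : 'M['F_2]_(m2, N)) : nat :=
  (N - \rank HX - \rank HZ)%N.

Definition css_min_distance (m1 m2 N : nat) (HX : 'M['F_2]_(m1, N))
  (HZ : 'M['F_2]_(m2, N)) (d : nat) : Prop :=
  (exists u v : 'rV['F_2]_N,
      [/\ css_commutes HX HZ u v, ~~ css_in_stab HX HZ u v & pauli_wt u v = d])
  /\ (forall u v : 'rV['F_2]_N,
      css_commutes HX HZ u v -> ~~ css_in_stab HX HZ u v -> (d <= pauli_wt u v)%N).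

Definition css_degenerate (m1 m2 N : nat) (HX : 'M['F_2]_(m1, N))
  (HZ : 'M['F_2]_(m2, N)) (d : nat) : Prop :=
  exists u v : 'rV['F_2]_N,
    [/\ css_in_stab HX HZ u v, (u != 0) || (v != 0) & (pauli_wt u v < d)%N].

Definition regular24 (m N : nat) (H : 'M['F_2]_(m, N)) : Prop :=
  (forall i, hwt (row i H) = 4%N) /\ (forall j, hwt ((col j H)^T) = 2%N).

Definition GB_regular24 (n : nat) (a b : {poly 'F_2}) : Prop :=
  regular24 (GB_HX n a b) /\ regular24 (GB_HZ n a b).

(* Main.v *)
Require Import Defs.
From mathcomp Require Import all_boot all_order all_algebra.
From mathcomp Require Import zify ring.
Set Implicit Arguments. Unset Strict Implicit. Unset Printing Implicit Defensive.
Import GRing.Theory.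
Local Open Scope ring_scope.

Lemma F2_cases (x : 'F_2) : x = 0 \/ x = 1.
Proof. case: x => [[|[|k]] H]; [left|right|by []]; exact/val_inj. Qed.

Lemma F2_addxx (x : 'F_2) : x + x = 0.
Proof. by case: (F2_cases x) => ->; apply/eqP. Qed.

Section Gen.
Variable m : nat.
Local Notation n := m.+1.

Lemma Xmod k : 'X^k %% ('X^n - 1 : {poly 'F_2}) = 'X^(k %% n).
Proof.
rewrite {1}(divn_eq k n) exprD mulnC exprM.
have -> : ('X^n : {poly 'F_2}) ^+ (k %/ n) = ('X^n ^+ (k %/ n) - 1) + 1 by rewrite subrK.
rewrite subrX1 mulrDl mul1r -mulrA mulrC modpD modp_mull add0r modp_small //.
by rewrite size_polyXn size_Xn_sub_1 // ltnS ltn_pmod.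
Qed.

Lemma polyrowX k (j : 'I_n) : polyrow n ('X^k) 0 j = (j == (k %% n)%N :> nat)%:R.
Proof. by rewrite /polyrow mxE Xmod coefXn. Qed.

Lemma polyrowD p q : polyrow n (p + q) = polyrow n p + polyrow n q.
Proof. by apply/matrixP=> i j; rewrite !mxE modpD coefD. Qed.

Lemma polyinv1X c : polyinv n (1 + 'X^c) = 1 + 'X^(m * c).
Proof. by rewrite /polyinv comp_polyD comp_polyC comp_Xn_poly -exprM. Qed.


Definition idx (k : nat) : 'I_n := inord (k %% n).

Lemma idxE k : idx k = (k %% n)%N :> nat.
Proof. by rewrite /idx inordK // ltn_pmod. Qed.

Lemma idx_val (i : 'I_n) : idx i = i.
Proof. by apply: ord_inj; rewrite idxE modn_small. Qed.

Lemma idx_mod k : idx (k %% n) = idx k.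
Proof. by apply: ord_inj; rewrite !idxE modn_mod. Qed.

Lemma idxD_mod k l : idx (k %% n + l) = idx (k + l).
Proof. by apply: ord_inj; rewrite !idxE modnDml. Qed.

Lemma idxDn k : idx (k + n) = idx k.
Proof. by apply: ord_inj; rewrite !idxE modnDr. Qed.

Lemma idxDMn k l : idx (k + l * n) = idx k.
Proof. by apply: ord_inj; rewrite !idxE addnC modnMDl. Qed.

Lemma sum_delta (F : 'I_n -> 'F_2) k :
  \sum_(j < n) F j * (j == (k %% n)%N :> nat)%:R = F (idx k).
Proof.
rewrite (bigD1 (idx k)) //= idxE eqxx mulr1 big1 ?addr0 // => j Hj.
suff -> : (j == (k %% n)%N :> nat) = false by rewrite mulr0.
by apply/negbTE; move: Hj; rewrite -val_eqE /= idxE.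
Qed.

Lemma sum_deltal (F : 'I_n -> 'F_2) k :
  \sum_(j < n) (j == (k %% n)%N :> nat)%:R * F j = F (idx k).
Proof. by rewrite -sum_delta; apply: eq_bigr => j _; rewrite mulrC. Qed.

Lemma sum_deltal_ord (F : 'I_n -> 'F_2) (i : 'I_n) :
  \sum_(j < n) (j == i :> nat)%:R * F j = F i.
Proof. by rewrite -{1}(modn_small (ltn_ord i)) sum_deltal idx_val. Qed.

Lemma sum_delta_ord (F : 'I_n -> 'F_2) (i : 'I_n) :
  \sum_(j < n) F j * (j == i :> nat)%:R = F i.
Proof. by rewrite -{1}(modn_small (ltn_ord i)) sum_delta idx_val. Qed.

Lemma idx_swap c c' (i j : 'I_n) : ((c + c') %% n = 0)%N ->
  (j == ((i + c) %% n)%N :> nat) = (i == ((j + c') %% n)%N :> nat).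
Proof.
have H : forall (x y : 'I_n) e e', ((e + e') %% n = 0)%N ->
    (y : nat) = ((x + e) %% n)%N -> (x : nat) = ((y + e') %% n)%N.
  move=> x y e e' He ->; rewrite modnDml -addnA -modnDmr He addn0 modn_small //.
move=> Hc; apply/eqP/eqP => Hij; first exact: H Hij.
by apply: (H _ _ c') Hij; rewrite addnC.
Qed.

Definition vL (v : 'rV['F_2]_(n + n)) k := v 0 (lshift n (idx k)).
Definition vR (v : 'rV['F_2]_(n + n)) k := v 0 (rshift n (idx k)).

Lemma GB_entryL c1 c2 (i j : 'I_n) :
  GB_mx n (1 + 'X^c1) (1 + 'X^c2) i (lshift n j) =
  (j == i :> nat)%:R + (j == ((i + c1) %% n)%N :> nat)%:R.
Proof.
rewrite /GB_mx mxE row_mxEl mulrDr mulr1 -exprD polyrowD mxE !polyrowX.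
by rewrite (modn_small (ltn_ord i)).
Qed.

Lemma GB_entryR c1 c2 (i j : 'I_n) :
  GB_mx n (1 + 'X^c1) (1 + 'X^c2) i (rshift n j) =
  (j == i :> nat)%:R + (j == ((i + c2) %% n)%N :> nat)%:R.
Proof.
rewrite /GB_mx mxE row_mxEr mulrDr mulr1 -exprD polyrowD mxE !polyrowX.
by rewrite (modn_small (ltn_ord i)).
Qed.

Lemma GB_dot c1 c2 (v : 'rV['F_2]_(n + n)) (i : 'I_n) :
  (GB_mx n (1 + 'X^c1) (1 + 'X^c2) *m v^T) i 0 =
  vL v i + vL v (i + c1) + vR v i + vR v (i + c2).
Proof.
rewrite mxE big_split_ord /=.
under eq_bigr do rewrite GB_entryL mxE mulrDl.
under [X in _ + X]eq_bigr do rewrite GB_entryR mxE mulrDl.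
rewrite !big_split /= !sum_deltal_ord !sum_deltal.
by rewrite /vL /vR idx_val !addrA.
Qed.

Lemma GB_lmulL c1 c2 c1' (g : 'rV['F_2]_n) (j : 'I_n) : ((c1 + c1') %% n = 0)%N ->
  (g *m GB_mx n (1 + 'X^c1) (1 + 'X^c2)) 0 (lshift n j) = g 0 j + g 0 (idx (j + c1')).
Proof.
move=> Hc; rewrite mxE.
under eq_bigr do rewrite GB_entryL eq_sym (idx_swap _ _ Hc) mulrDr.
by rewrite big_split /= sum_delta_ord sum_delta.
Qed.

Lemma GB_lmulR c1 c2 c2' (g : 'rV['F_2]_n) (j : 'I_n) : ((c2 + c2') %% n = 0)%N ->
  (g *m GB_mx n (1 + 'X^c1) (1 + 'X^c2)) 0 (rshift n j) = g 0 j + g 0 (idx (j + c2')).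
Proof.
move=> Hc; rewrite mxE.
under eq_bigr do rewrite GB_entryR eq_sym (idx_swap _ _ Hc) mulrDr.
by rewrite big_split /= sum_delta_ord sum_delta.
Qed.


Lemma big_shift (R : Type) (e : R) (op : Monoid.com_law e) (f : nat -> R) a :
  (forall i, f (i + n)%N = f i) ->
  \big[op/e]_(0 <= i < n) f (i + a)%N = \big[op/e]_(0 <= i < n) f i.
Proof.
move=> fP; elim: a => [|a IH]; first by apply: eq_bigr => i _; rewrite addn0.
rewrite -IH.
have -> : \big[op/e]_(0 <= i < n) f (i + a.+1)%N = \big[op/e]_(1 <= i < n.+1) f (i + a)%N.
  by rewrite big_add1 /=; apply: eq_bigr => i _; rewrite addnS addSn.
rewrite big_nat_recr //= [in RHS]big_ltn //= Monoid.mulmC.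
by rewrite addnC fP add0n.
Qed.

Definition cnt (f : nat -> 'F_2) := (\sum_(0 <= i < n) (f i != 0%R : nat))%N.

Lemma card_split (w : 'rV['F_2]_(n + n)) :
  #|[set j | w 0 j != 0]| = (cnt (vL w) + cnt (vR w))%N.
Proof.
rewrite -sum1_card big_mkcond /= big_split_ord /cnt !big_mkord.
by congr (_ + _)%N; apply: eq_bigr => i _; rewrite inE /vL /vR idx_val; case: ifP.
Qed.

Lemma negc c : ((c + (n - c %% n)) %% n = 0)%N.
Proof. by rewrite -modnDml subnKC ?modnn // ltnW // ltn_pmod. Qed.

Lemma sum_idx_shift (g : 'rV['F_2]_n) c :
  \sum_(j < n) g 0 (idx (j + c)) = \sum_(j < n) g 0 j.
Proof.
rewrite -(big_mkord xpredT (fun j => g 0 (idx (j + c)))).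
rewrite (@big_shift _ _ _ (fun j => g 0 (idx j)) c) => [|i]; last by rewrite idxDn.
by rewrite big_mkord; apply: eq_bigr => j _; rewrite idx_val.
Qed.

Lemma ones_mul c1 c2 :
  (const_mx 1 : 'rV['F_2]_n) *m GB_mx n (1 + 'X^c1) (1 + 'X^c2) = 0.
Proof.
apply/matrixP => i j; rewrite [i]ord1 [RHS]mxE.
case: (split_ordP j) => k ->.
  by rewrite (GB_lmulL _ _ _ (negc c1)) !mxE F2_addxx.
by rewrite (GB_lmulR _ _ _ (negc c2)) !mxE F2_addxx.
Qed.

Lemma rank_m (H : 'M['F_2]_(n, n + n)) :
  (const_mx 1 : 'rV['F_2]_n) *m H = 0 ->
  (forall r : 'rV['F_2]_n, r *m H = 0 -> forall j, r 0 j = r 0 0) ->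
  \rank H = m.
Proof.
move=> H1 Hc.
have k1 : ((const_mx 1 : 'rV['F_2]_n) <= kermx H)%MS by apply/sub_kermxP.
have k2 : (kermx H <= (const_mx 1 : 'rV['F_2]_n))%MS.
  apply/row_subP => i.
  have Hr : row i (kermx H) *m H = 0 by rewrite -row_mul mulmx_ker row0.
  have -> : row i (kermx H) = (row i (kermx H)) 0 0 *: const_mx 1.
    apply/matrixP => a b; rewrite [a]ord1 !mxE mulr1.
    by have := Hc _ Hr b; rewrite !mxE.
  by apply: scalemx_sub.
have r1 : \rank (const_mx 1 : 'rV['F_2]_n) = 1%N.
  rewrite rank_rV; case: eqP => // /matrixP /(_ 0 0); rewrite !mxE => /eqP.
  by rewrite oner_eq0.
have := mxrankS k1; have := mxrankS k2; rewrite r1 mxrank_ker.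
have := rank_leq_row H; lia.
Qed.

Lemma const_step1 (r : 'rV['F_2]_n) :
  (forall j : 'I_n, r 0 j = r 0 (idx (j + 1))) -> forall j, r 0 j = r 0 0.
Proof.
move=> Hr j.
have H : forall k, r 0 (idx k) = r 0 (idx 0).
  elim=> // k IH; by rewrite -IH [RHS]Hr idxE idxD_mod addn1.
have h0 : idx 0 = 0 by apply: ord_inj; rewrite idxE mod0n.
by have := H j; rewrite idx_val h0.
Qed.

Lemma const_stepm (r : 'rV['F_2]_n) :
  (forall j : 'I_n, r 0 j = r 0 (idx (j + m))) -> forall j, r 0 j = r 0 0.
Proof.
move=> Hr; apply: const_step1 => j.
by rewrite [RHS]Hr idxE idxD_mod -addnA add1n idxDn idx_val.
Qed.

Lemma hwt_deltas N (s : seq 'I_N) : uniq s ->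
  hwt (\sum_(x <- s) delta_mx 0 x) = size s.
Proof.
move=> us; rewrite /hwt.
have E : forall j, (\sum_(x <- s) delta_mx (0 : 'I_1) x) 0 j = (j \in s)%:R :> 'F_2.
  move=> j; rewrite summxE; elim: s us => [|x s IH] /=; first by rewrite big_nil.
  case/andP => xs us; rewrite big_cons IH // mxE eqxx /= inE.
  case: (eqVneq j x) => [->|]; last by rewrite add0r.
  by rewrite (negbTE xs) addr0.
have -> : [set j | (\sum_(x <- s) (delta_mx (0 : 'I_1) x : 'rV['F_2]_N)) 0 j != 0] = [set j in s].
  by apply/setP => j; rewrite !inE E; case: (j \in s) => //=; rewrite oner_eq0.
by rewrite cardsE; apply/card_uniqP.
Qed.


Lemma nz_sum (F : nat -> 'F_2) A :
  \sum_(0 <= i < A) F i != 0 -> (0 < \sum_(0 <= i < A) (F i != 0%R : nat))%N.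
Proof.
elim: A => [|A IH]; first by rewrite !big_geq // eqxx.
rewrite !big_nat_recr //=; case: (eqVneq (F A) 0) => [->|] /=.
  by rewrite addr0 addn0.
by rewrite addn1.
Qed.

Lemma count_lb (f g : nat -> 'F_2) A B (fa fb : nat -> nat) :
  (forall i, f (i + n)%N = f i) -> (forall i, g (i + n)%N = g i) ->
  (forall j, \sum_(0 <= i < A) f (fa i + j)%N + \sum_(0 <= k < B) g (fb k + j)%N != 0) ->
  (n <= A * cnt f + B * cnt g)%N.
Proof.
move=> fP gP H.
have H1 : forall j, (1 <= \sum_(0 <= i < A) (f (fa i + j)%N != 0%R : nat)
                     + \sum_(0 <= k < B) (g (fb k + j)%N != 0%R : nat))%N.
  move=> j; have := H j.
  case: (eqVneq (\sum_(0 <= i < A) f (fa i + j)%N) 0) => [->|/nz_sum]; last by lia.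
  by rewrite add0r => /nz_sum; lia.
have -> : n = (\sum_(0 <= j < n) 1)%N by rewrite sum_nat_const_nat subn0 muln1.
apply: leq_trans (leq_sum _ (fun j _ => H1 j)) _.
rewrite big_split /= (exchange_big_nat _ 0 n 0 A) (exchange_big_nat _ 0 n 0 B) /=.
have E : forall (h : nat -> 'F_2) (fc : nat -> nat) C, (forall i, h (i + n)%N = h i) ->
    (\sum_(0 <= i < C) \sum_(0 <= j < n) (h (fc i + j)%N != 0%R : nat))%N = (C * cnt h)%N.
  move=> h fc C hP; rewrite -[X in (_ = X * _)%N]subn0 -sum_nat_const_nat.
  apply: eq_bigr => i _; rewrite /cnt.
  rewrite -(@big_shift _ _ _ (fun j => (h j != 0%R : nat)) (fc i)) => [|j]; last by rewrite hP.
  by apply: eq_bigr => j _; rewrite addnC.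
by rewrite (E _ _ _ fP) (E _ _ _ gP).
Qed.

Lemma eqLL (a b : 'I_n) : (lshift n a == lshift n b) = (a == b :> nat).
Proof. by rewrite -val_eqE. Qed.
Lemma eqRR (a b : 'I_n) : (rshift n a == rshift n b) = (a == b :> nat).
Proof. by rewrite -val_eqE /= eqn_add2l. Qed.
Lemma eqLR (a b : 'I_n) : (lshift n a == rshift n b) = false.
Proof. apply/negbTE; rewrite -val_eqE /=; have := ltn_ord a; lia. Qed.
Lemma eqRL (a b : 'I_n) : (rshift n a == lshift n b) = false.
Proof. by rewrite eq_sym eqLR. Qed.

Lemma modneq (i : 'I_n) c : (c %% n != 0)%N -> (i == ((i + c) %% n)%N :> nat) = false.
Proof.
move=> Hc; apply/negbTE; apply: contra Hc => /eqP H.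
have : (i + c == i + 0 %[mod n])%N by rewrite addn0 -H modn_small.
by rewrite eqn_modDl mod0n.
Qed.

Lemma negnz c c' : ((c + c') %% n = 0)%N -> (c %% n != 0)%N -> (c' %% n != 0)%N.
Proof.
move=> H; apply: contra => /eqP H'; apply/eqP.
by rewrite -H -modnDmr H' addn0.
Qed.

Lemma rowij p q (A : 'M['F_2]_(p, q)) i j : row i A 0 j = A i j.
Proof. by rewrite mxE. Qed.
Lemma colij p q (A : 'M['F_2]_(p, q)) i j : col j A i 0 = A i j.
Proof. by rewrite mxE. Qed.
Lemma colTij p q (A : 'M['F_2]_(p, q)) i j : (col j A)^T 0 i = A i j.
Proof. by rewrite !mxE. Qed.

Lemma row_GB c1 c2 (i : 'I_n) :
  row i (GB_mx n (1 + 'X^c1) (1 + 'X^c2)) =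
  \sum_(x <- [:: lshift n i; lshift n (idx (i + c1)); rshift n i; rshift n (idx (i + c2))])
     delta_mx 0 x.
Proof.
apply/matrixP => a j; rewrite [a]ord1 summxE !big_cons big_nil rowij addr0.
case: (split_ordP j) => k ->.
  by rewrite GB_entryL !mxE !eqLL !eqLR !idxE /= ?mulr0n ?addr0 ?add0r ?addrA.
by rewrite GB_entryR !mxE !eqRR !eqRL !idxE /= ?mulr0n ?addr0 ?add0r ?addrA.
Qed.

Lemma colL_GB c1 c2 c1' (k : 'I_n) : ((c1 + c1') %% n = 0)%N ->
  (col (lshift n k) (GB_mx n (1 + 'X^c1) (1 + 'X^c2)))^T =
  \sum_(x <- [:: k; idx (k + c1')]) delta_mx 0 x.
Proof.
move=> Hc; apply/matrixP => a i; rewrite [a]ord1 summxE !big_cons big_nil colTij addr0.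
by rewrite GB_entryL !mxE (idx_swap _ _ Hc) -!val_eqE /= idxE eq_sym.
Qed.

Lemma colR_GB c1 c2 c2' (k : 'I_n) : ((c2 + c2') %% n = 0)%N ->
  (col (rshift n k) (GB_mx n (1 + 'X^c1) (1 + 'X^c2)))^T =
  \sum_(x <- [:: k; idx (k + c2')]) delta_mx 0 x.
Proof.
move=> Hc; apply/matrixP => a i; rewrite [a]ord1 summxE !big_cons big_nil colTij addr0.
by rewrite GB_entryR !mxE (idx_swap _ _ Hc) -!val_eqE /= idxE eq_sym.
Qed.

Lemma GB_reg c1 c2 c1' c2' : ((c1 + c1') %% n = 0)%N -> ((c2 + c2') %% n = 0)%N ->
  (c1 %% n != 0)%N -> (c2 %% n != 0)%N ->
  regular24 (GB_mx n (1 + 'X^c1) (1 + 'X^c2)).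
Proof.
move=> H1 H2 N1 N2; split.
  move=> i; rewrite row_GB hwt_deltas // /= !inE ?eqLL ?eqRR ?eqLR ?eqRL /= !idxE.
  by rewrite !modneq.
move=> j; case: (split_ordP j) => k ->.
  rewrite (colL_GB _ _ H1) hwt_deltas //= inE andbT -val_eqE /= idxE modneq //.
  exact: negnz N1.
rewrite (colR_GB _ _ H2) hwt_deltas //= inE andbT -val_eqE /= idxE modneq //.
exact: negnz N2.
Qed.

Lemma col_GBL c1 c2 c1' l : ((c1 + c1') %% n = 0)%N ->
  GB_mx n (1 + 'X^c1) (1 + 'X^c2) *m (delta_mx 0 (lshift n (idx l)) : 'rV['F_2]_(n + n))^T =
  (delta_mx (idx l) 0 : 'cV['F_2]_n) + delta_mx (idx (l + c1')) 0.
Proof.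
move=> Hc; rewrite trmx_delta -colE; apply/matrixP => i a; rewrite [a]ord1 colij.
rewrite GB_entryL !mxE (idx_swap _ _ Hc) !andbT -!val_eqE /= !idxE eq_sym.
by rewrite modnDml.
Qed.

Lemma col_GBR c1 c2 c2' l : ((c2 + c2') %% n = 0)%N ->
  GB_mx n (1 + 'X^c1) (1 + 'X^c2) *m (delta_mx 0 (rshift n (idx l)) : 'rV['F_2]_(n + n))^T =
  (delta_mx (idx l) 0 : 'cV['F_2]_n) + delta_mx (idx (l + c2')) 0.
Proof.
move=> Hc; rewrite trmx_delta -colE; apply/matrixP => i a; rewrite [a]ord1 colij.
rewrite GB_entryR !mxE (idx_swap _ _ Hc) !andbT -!val_eqE /= !idxE eq_sym.
by rewrite modnDml.
Qed.

Lemma blocksum c1 c2 c1' c2' (w : 'rV['F_2]_(n + n)) :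
  ((c1 + c1') %% n = 0)%N -> ((c2 + c2') %% n = 0)%N ->
  (w <= GB_mx n (1 + 'X^c1) (1 + 'X^c2))%MS ->
  \sum_(j < n) w 0 (lshift n j) = 0 /\ \sum_(j < n) w 0 (rshift n j) = 0.
Proof.
move=> H1 H2 /submxP [g ->]; split.
  under eq_bigr do rewrite (GB_lmulL _ _ _ H1).
  by rewrite big_split /= sum_idx_shift F2_addxx.
under eq_bigr do rewrite (GB_lmulR _ _ _ H2).
by rewrite big_split /= sum_idx_shift F2_addxx.
Qed.

End Gen.

Ltac f2 := repeat (let x := fresh in move=> x; case: (F2_cases x) => ->; clear x);
  first [ exact isT | (apply/eqP; exact isT) | (apply/implyP; exact isT)
        | (let Hb := fresh in move=> /eqP Hb; apply/eqP; move: Hb; apply/implyP; exact isT)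
        | (let Hb := fresh in move=> /eqP Hb; move: Hb; apply/implyP; exact isT) ].

Lemma F2_solve4 (a b c e : 'F_2) : a + b + c + e = 0 -> b = a + c + e.
Proof. move: a b c e; f2. Qed.

Lemma F2_tel (g G a b e : 'F_2) : G + a + b + (g + b + e) = g + G + a + e.
Proof. move: g G a b e; f2. Qed.

Section Pattern.
Variable t : nat.
Local Notation d := (t.*2.+1)%N.
Local Notation m := (t * d + t)%N.
Local Notation n := m.+1.
Variables p q : nat -> 'F_2.
Hypothesis pP : forall i, p (i + n)%N = p i.
Hypothesis qP : forall i, q (i + n)%N = q i.
Hypothesis cond : forall i, p i + p i.+1 + q i + q (i + d)%N = 0.

Definition S k := \sum_(0 <= i < k) q i.
Definition gam := p 0 + S d.
Definition sig := S n.

Lemma S0 : S 0 = 0. Proof. by rewrite /S big_geq. Qed.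
Lemma S_S k : S k.+1 = S k + q k. Proof. by rewrite /S big_nat_recr. Qed.

Lemma L1 i : p i = gam + S i + S (i + d).
Proof.
elim: i => [|i IH].
  by rewrite /gam S0 add0n addr0 -addrA F2_addxx addr0.
rewrite (F2_solve4 (cond i)) IH addSn !S_S; ring.
Qed.

Lemma L2 a b : S (a + b) = S a + \sum_(0 <= i < b) q (i + a)%N.
Proof.
elim: b => [|b IH]; first by rewrite addn0 big_geq // addr0.
by rewrite addnS S_S IH big_nat_recr //= addnC addrA.
Qed.

Lemma Sn a : S (a + n) = S a + sig.
Proof. by rewrite L2 (@big_shift _ _ _ _ q). Qed.

Lemma Tel c N : \sum_(0 <= k < N) p (k * d + c)%N = gam *+ N + S c + S (N * d + c).
Proof.
elim: N => [|N IH]; first by rewrite big_geq // mul0n add0n mulr0n add0r F2_addxx.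
rewrite big_nat_recr //= IH L1 mulrS.
have -> : (N * d + c + d = N.+1 * d + c)%N by rewrite mulSn; lia.
exact: F2_tel.
Qed.


Lemma L3a j : \sum_(0 <= i < t.+1) q (i + j)%N + \sum_(0 <= k < t) p (k * d + t.+1 + j)%N
  = gam *+ t + sig.
Proof.
have E1 : \sum_(0 <= i < t.+1) q (i + j)%N = S j + S (j + t.+1).
  by rewrite L2 addrA F2_addxx add0r.
rewrite E1; under eq_bigr do rewrite -addnA.
rewrite Tel.
have -> : (t * d + (t.+1 + j) = j + n)%N by lia.
rewrite Sn addnC; move: (S j) (S (t.+1 + j)) (gam *+ t) sig; f2.
Qed.

Lemma L3b j : \sum_(0 <= k < t.+1) p (k * d + j)%N + \sum_(0 <= i < t) q (i + j)%N
  = gam *+ t.+1 + sig.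
Proof.
have E1 : \sum_(0 <= i < t) q (i + j)%N = S j + S (j + t).
  by rewrite L2 addrA F2_addxx add0r.
rewrite E1 Tel.
have -> : (t.+1 * d + j = (j + t) + n)%N by rewrite mulSn; lia.
rewrite Sn; move: (S j) (S (j + t)) (gam *+ t.+1) sig; f2.
Qed.

Lemma F2_choiceb (g x s : 'F_2) : ((g == 0) ==> (x == 0)) ==> (~~ ((g == 0) && (s == 0)) ==>
  ((x + s != 0) || (g + x + s != 0))).
Proof. move: g x s; f2. Qed.

Lemma F2_choice (g x s : 'F_2) : (g == 0) ==> (x == 0) -> ~~ ((g == 0) && (s == 0)) ->
  (x + s != 0) || (g + x + s != 0).
Proof. by move=> H1 H2; have := F2_choiceb g x s; rewrite H1 H2. Qed.

Lemma pattern_main : (gam = 0 /\ sig = 0) \/ (d <= cnt m p + cnt m q)%N.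
Proof.
case: (boolP ((gam == 0) && (sig == 0))) => [/andP [/eqP g0 /eqP s0]|Hn]; first by left.
right.
have h1 : (gam == 0) ==> (gam *+ t == 0) by apply/implyP => /eqP ->; rewrite mul0rn.
have := F2_choice h1 Hn; rewrite -mulrS; case/orP => H.
  have Hc : forall j, \sum_(0 <= i < t.+1) q (i + j)%N
      + \sum_(0 <= k < t) p (k * d + t.+1 + j)%N != 0 by move=> j; rewrite L3a.
  have := @count_lb m q p t.+1 t (fun i => i) (fun k => k * d + t.+1)%N qP pP Hc.
  move=> Hn'; rewrite leqNgt; apply/negP => Hlt.
  have := leq_mul (leqnn t.+1) (Hlt : (cnt m p + cnt m q <= t.*2)%N); nia.
have Hc : forall j, \sum_(0 <= k < t.+1) p (k * d + j)%N
    + \sum_(0 <= i < t) q (i + j)%N != 0 by move=> j; rewrite L3b.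
have := @count_lb m p q t.+1 t (fun k => k * d)%N (fun i => i) pP qP Hc.
move=> Hn'; rewrite leqNgt; apply/negP => Hlt.
have := leq_mul (leqnn t.+1) (Hlt : (cnt m p + cnt m q <= t.*2)%N); nia.
Qed.

End Pattern.

Lemma per_mod (T : Type) (f : nat -> T) N :
  (forall x, f (x + N)%N = f x) -> forall x, f (x %% N)%N = f x.
Proof.
move=> H x; rewrite {2}(divn_eq x N) addnC.
elim: (x %/ N)%N => [|k IH]; first by rewrite mul0n addn0.
by rewrite mulSnr addnA H IH.
Qed.

Lemma per_mul (T : Type) (f : nat -> T) N :
  (forall x, f (x + N)%N = f x) -> forall x l, f (x + l * N)%N = f x.
Proof.
move=> H x; elim=> [|l IH]; first by rewrite mul0n addn0.
by rewrite mulSnr addnA H IH.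
Qed.

Lemma modSmod x N : (((x %% N).+1) %% N = x.+1 %% N)%N.
Proof. by rewrite -[(x %% N).+1]addn1 -[x.+1]addn1 modnDml. Qed.

Lemma arith1 a M dd : (a + dd + M * dd = a + dd * M.+1)%N.
Proof. by rewrite [(dd * M.+1)%N]mulnS [(dd * M)%N]mulnC addnA. Qed.
Lemma arith2 k M t2 : ((k + M * t2.+1).+1 + t2 = k + t2.+1 * M.+1)%N.
Proof. rewrite [(t2.+1 * M.+1)%N]mulnS [(t2.+1 * M)%N]mulnC; move: (M * t2.+1)%N => P; lia. Qed.
Lemma arith3 k M t2 : ((k + M * t2.+1).+1 + t2.+1 = k.+1 + t2.+1 * M.+1)%N.
Proof. rewrite [(t2.+1 * M.+1)%N]mulnS [(t2.+1 * M)%N]mulnC; move: (M * t2.+1)%N => P; lia. Qed.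

Lemma mx_addxx p r (A : 'M['F_2]_(p, r)) : A + A = 0.
Proof. by apply/matrixP => i j; rewrite !mxE F2_addxx. Qed.

Lemma F2_eq0 (x y : 'F_2) : x + y = 0 -> x = y.
Proof. by move=> H; rewrite -[x]addr0 -(F2_addxx y) addrA H add0r. Qed.

Section Main.
Variable t : nat.
Hypothesis t1 : (0 < t)%N.
Local Notation d := (t.*2.+1)%N.
Local Notation m := (t * d + t)%N.
Local Notation n := m.+1.
Local Notation HX := (GB_mx n (1 + 'X^1) (1 + 'X^d)).
Local Notation HZ := (GB_mx n (1 + 'X^(m * d)) (1 + 'X^(m * 1))).

Lemma HZ_eq : GB_HZ n (1 + 'X^1) (1 + 'X^d) = HZ.
Proof. by rewrite /GB_HZ !polyinv1X. Qed.

Lemma negx x : ((x + m * x) %% n = 0)%N.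
Proof. by rewrite -mulSn modnMr. Qed.
Lemma negx' x : ((m * x + x) %% n = 0)%N.
Proof. by rewrite addnC negx. Qed.

Lemma vL_idx (v : 'rV['F_2]_(n + n)) k l : vL v (idx m k + l) = vL v (k + l).
Proof. by rewrite /vL idxE idxD_mod. Qed.
Lemma vR_idx (v : 'rV['F_2]_(n + n)) k l : vR v (idx m k + l) = vR v (k + l).
Proof. by rewrite /vR idxE idxD_mod. Qed.
Lemma vL_idx0 (v : 'rV['F_2]_(n + n)) k : vL v (idx m k) = vL v k.
Proof. by rewrite /vL idxE idx_mod. Qed.
Lemma vR_idx0 (v : 'rV['F_2]_(n + n)) k : vR v (idx m k) = vR v k.
Proof. by rewrite /vR idxE idx_mod. Qed.
Lemma vLP (v : 'rV['F_2]_(n + n)) i : vL v (i + n) = vL v i.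
Proof. by rewrite /vL idxDn. Qed.
Lemma vRP (v : 'rV['F_2]_(n + n)) i : vR v (i + n) = vR v i.
Proof. by rewrite /vR idxDn. Qed.
Lemma vL_ord (v : 'rV['F_2]_(n + n)) (k : 'I_n) : v 0 (lshift n k) = vL v k.
Proof. by rewrite /vL idx_val. Qed.
Lemma vR_ord (v : 'rV['F_2]_(n + n)) (k : 'I_n) : v 0 (rshift n k) = vR v k.
Proof. by rewrite /vR idx_val. Qed.

Lemma Zcond (v : 'rV['F_2]_(n + n)) : HX *m v^T = 0 ->
  forall i, vL v i + vL v i.+1 + vR v i + vR v (i + d) = 0.
Proof.
move=> H i; have := GB_dot 1 d v (idx m i); rewrite H mxE.
by rewrite vL_idx0 vR_idx0 vL_idx vR_idx addn1 => <-.
Qed.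

Lemma pw_ge (u v : 'rV['F_2]_(n + n)) : (cnt m (vL v) + cnt m (vR v) <= pauli_wt u v)%N.
Proof.
rewrite -card_split; apply: subset_leq_card; apply/subsetP => j.
by rewrite !inE => ->; rewrite orbT.
Qed.

Lemma pw_ge' (u v : 'rV['F_2]_(n + n)) : (cnt m (vL u) + cnt m (vR u) <= pauli_wt u v)%N.
Proof.
rewrite -card_split; apply: subset_leq_card; apply/subsetP => j.
by rewrite !inE => ->.
Qed.

Lemma Zlow (v : 'rV['F_2]_(n + n)) : HX *m v^T = 0 -> ~~ (v <= HZ)%MS ->
  (d <= cnt m (vL v) + cnt m (vR v))%N.
Proof.
move=> H Hn.
case: (pattern_main (vLP v) (vRP v) (Zcond H)) => [[g0 s0]|//].
exfalso; move/negP: Hn; apply; apply/submxP.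
have Sper : forall x, S (vR v) (x + n) = S (vR v) x.
  by move=> x; rewrite (Sn (vRP v)) s0 addr0.
exists (\row_(i < n) S (vR v) i).
apply/matrixP => a j; rewrite [a]ord1; case: (split_ordP j) => k ->.
  rewrite (GB_lmulL _ _ _ (negx' d)) !mxE idxE (per_mod Sper) vL_ord.
  by rewrite (L1 (Zcond H)) g0 add0r.
rewrite (GB_lmulR _ _ _ (negx' 1)) !mxE idxE (per_mod Sper) vR_ord.
by rewrite addn1 S_S addrA F2_addxx add0r.
Qed.


Lemma Xcond (u : 'rV['F_2]_(n + n)) : HZ *m u^T = 0 ->
  forall i, vR u (i + t.*2) + vR u (i.+1 + t.*2) + vL u i + vL u (i + d) = 0.
Proof.
move=> H i; have := GB_dot (m * d) (m * 1) u (idx m (i + d)); rewrite H mxE.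
rewrite vL_idx0 vR_idx0 vL_idx vR_idx.
have -> : vL u (i + d + m * d) = vL u i.
  by rewrite arith1 /vL idxDMn.
have -> : vR u (i + d + m * 1) = vR u (i + t.*2).
  by rewrite muln1 /vR -(idxDn _ (i + t.*2)); congr (u 0 (rshift _ (idx _ _))); lia.
rewrite addSn -addnS => E; apply: etrans (esym E); ring.
Qed.

Lemma Xlow (u : 'rV['F_2]_(n + n)) : HZ *m u^T = 0 -> ~~ (u <= HX)%MS ->
  (d <= cnt m (vL u) + cnt m (vR u))%N.
Proof.
move=> H Hn.
pose p := fun i => vR u (i + t.*2).
have pP : forall i, p (i + n)%N = p i.
  by move=> i; rewrite /p addnAC vRP.
have cond : forall i, p i + p i.+1 + vL u i + vL u (i + d) = 0 by exact: Xcond.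
case: (pattern_main pP (vLP u) cond) => [[g0 s0]|Hc]; last first.
  suff -> : cnt m (vR u) = cnt m p by rewrite addnC.
  rewrite /cnt /p (@big_shift m _ _ _ (fun i => (vR u i != 0%R : nat)) t.*2) // => i.
  by rewrite vRP.
exfalso; move/negP: Hn; apply; apply/submxP.
have Sper : forall x, S (vL u) (x + n) = S (vL u) x.
  by move=> x; rewrite (Sn (vLP u)) s0 addr0.
exists (\row_(i < n) S (vL u) i.+1).
apply/matrixP => a j; rewrite [a]ord1; case: (split_ordP j) => k ->.
  rewrite (GB_lmulL _ _ _ (negx 1)) !mxE idxE vL_ord.
  rewrite -(per_mod Sper ((k + m * 1) %% n).+1) modSmod (per_mod Sper).
  have -> : ((k + m * 1).+1 = k + n)%N by rewrite muln1 addnS.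
  by rewrite Sper S_S addrC addrA F2_addxx add0r.
rewrite (GB_lmulR _ _ _ (negx d)) !mxE idxE vR_ord.
rewrite -(per_mod Sper ((k + m * d) %% n).+1) modSmod (per_mod Sper).
have := L1 cond (k + m * d).+1; rewrite g0 add0r /p.
rewrite arith2 arith3.
rewrite /vR idxDMn (per_mul Sper) -/(vR u k) => ->.
by rewrite addrC.
Qed.


Lemma n_gt1 : (1 < n)%N.
Proof. rewrite ltnS; move: (t * d)%N => P; lia. Qed.

Lemma d_lt_n : (d < n)%N.
Proof.
have : (t * 3 <= t * d)%N by rewrite leq_mul2l; apply/orP; right; lia.
move: (t * d)%N => P; lia.
Qed.

Lemma nz1 : (1 %% n != 0)%N.
Proof. by rewrite modn_small ?n_gt1. Qed.
Lemma nzd : (d %% n != 0)%N.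
Proof. by rewrite modn_small ?d_lt_n. Qed.

Lemma rankHX : \rank HX = m.
Proof.
apply: rank_m; first exact: ones_mul.
move=> r Hr; apply: const_stepm => j; apply: F2_eq0.
by have := GB_lmulL d r j (negx 1); rewrite Hr mxE muln1 => <-.
Qed.

Lemma rankHZ : \rank HZ = m.
Proof.
apply: rank_m; first exact: ones_mul.
move=> r Hr; apply: const_step1 => j; apply: F2_eq0.
by have := GB_lmulR (m * d) r j (negx' 1); rewrite Hr mxE => <-.
Qed.

Lemma regHX : regular24 HX.
Proof. exact: (GB_reg (negx 1) (negx d) nz1 nzd). Qed.

Lemma regHZ : regular24 HZ.
Proof.
exact: (GB_reg (negx' d) (negx' 1) (negnz (negx d) nzd) (negnz (negx 1) nz1)).
Qed.

Definition sW : seq 'I_(n + n) :=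
  [seq lshift n (idx m (k * d)) | k <- iota 0 t.+1] ++ [seq rshift n (idx m i) | i <- iota 0 t].
Definition uW : 'rV['F_2]_(n + n) := \sum_(x <- sW) delta_mx 0 x.

Lemma kd_lt k : (k < t.+1)%N -> (k * d < n)%N.
Proof.
move=> Hk; have : (k * d <= t * d)%N by rewrite leq_mul2r -ltnS Hk orbT.
move: (k * d)%N (t * d)%N => P Q; lia.
Qed.

Lemma uniq_sW : uniq sW.
Proof.
rewrite cat_uniq; apply/and3P; split.
- rewrite map_inj_in_uniq ?iota_uniq // => i j.
  rewrite !mem_iota add0n => /andP [_ Hi] /andP [_ Hj] /eqP.
  rewrite eqLL !idxE !modn_small ?kd_lt // => /eqP.
  by move=> /eqP; rewrite eqn_pmul2r // => /eqP.
- apply/hasPn => x /mapP [i _ ->]; apply/negP => /mapP [k _ /eqP].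
  by rewrite eqRL.
- rewrite map_inj_in_uniq ?iota_uniq // => i j.
  rewrite !mem_iota add0n => /andP [_ Hi] /andP [_ Hj] /eqP.
  rewrite eqRR !idxE !modn_small //; [by move/eqP| |]; move: d_lt_n; lia.
Qed.

Lemma size_sW : size sW = d.
Proof. by rewrite size_cat !size_map !size_iota addSn -addnn. Qed.

Lemma hwt_uW : hwt uW = d.
Proof. by rewrite /uW hwt_deltas ?uniq_sW ?size_sW. Qed.

Lemma tel2 (F : nat -> 'cV['F_2]_n) N :
  \sum_(k <- iota 0 N) (F k + F k.+1) = F 0%N + F N.
Proof.
have -> : iota 0 N = index_iota 0 N by rewrite /index_iota subn0.
elim: N => [|N IH]; first by rewrite big_geq // mx_addxx.
by rewrite big_nat_recr //= IH addrA -(addrA (F 0%N)) mx_addxx addr0.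
Qed.

Lemma HZ_uW : HZ *m uW^T = 0.
Proof.
rewrite /uW linear_sum mulmx_sumr big_cat !big_map.
under eq_bigr do rewrite (col_GBL _ _ (negx' d)).
under [X in _ + X = _]eq_bigr do rewrite (col_GBR _ _ (negx' 1)).
under eq_bigr do rewrite -mulSnr.
under [X in _ + X = _]eq_bigr do rewrite addn1.
have T1 := tel2 (fun k => (delta_mx (idx m (k * d)) 0 : 'cV['F_2]_n)) t.+1.
have T2 := tel2 (fun k => (delta_mx (idx m k) 0 : 'cV['F_2]_n)) t.
move: T1 T2; cbv beta => T1 T2; rewrite T1 T2 mul0n.
have -> : idx m (t.+1 * d) = idx m t.
  by rewrite -(idxDn _ t); congr (idx _ _); rewrite mulSn; move: (t * d)%N => P; lia.
exact: mx_addxx.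
Qed.

Local Arguments iota : simpl never.

Lemma uW_notin : ~~ (uW <= HX)%MS.
Proof.
apply/negP => /(blocksum (negx 1) (negx d)) [HL HR].
have EL : \sum_(j < n) uW 0 (lshift n j) = 1 *+ t.+1.
  rewrite /uW; under eq_bigr do rewrite summxE.
  rewrite exchange_big big_cat !big_map /=.
  rewrite [X in _ + X]big1 ?addr0 => [|i _]; last first.
    by apply: big1 => j _; rewrite mxE eqLR andbF.
  rewrite (eq_bigr (fun _ => 1)) => [|k _].
    by rewrite big_const_seq count_predT size_iota iter_addr addr0.
  under eq_bigr do rewrite mxE eqLL /= -[_%:R]mulr1.
  exact: sum_deltal_ord.
have ER : \sum_(j < n) uW 0 (rshift n j) = 1 *+ t.
  rewrite /uW; under eq_bigr do rewrite summxE.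
  rewrite exchange_big big_cat !big_map /=.
  rewrite [X in X + _]big1 ?add0r => [|i _]; last first.
    by apply: big1 => j _; rewrite mxE eqRL andbF.
  rewrite (eq_bigr (fun _ => 1)) => [|k _].
    by rewrite big_const_seq count_predT size_iota iter_addr addr0.
  under eq_bigr do rewrite mxE eqRR /= -[_%:R]mulr1.
  exact: sum_deltal_ord.
move: HL; rewrite EL mulrS -ER HR addr0 => /eqP; by rewrite oner_eq0.
Qed.

Lemma pw_uW : pauli_wt uW 0 = d.
Proof.
rewrite /pauli_wt; transitivity (hwt uW); last exact: hwt_uW.
rewrite /hwt; apply: eq_card => j.
by rewrite !inE mxE orbF.
Qed.

End Main.

Lemma row_nz N (w : 'rV['F_2]_N) : hwt w = 4%N -> w != 0.
Proof.
move=> H; apply/negP => /eqP E; move: H; rewrite E /hwt.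
have -> : [set j | (0 : 'rV['F_2]_N) 0 j != 0] = set0.
  by apply/setP => j; rewrite !inE mxE eqxx.
by rewrite cards0.
Qed.

Lemma pw_0 N (w : 'rV['F_2]_N) : pauli_wt w 0 = hwt w.
Proof. by rewrite /pauli_wt /hwt; apply: eq_card => j; rewrite !inE mxE orbF. Qed.

Theorem theorem4 (d : nat) :
  (3 <= d)%N -> odd d ->
  exists (n : nat) (a b : {poly 'F_2}),
    [/\ (n + n = d ^ 2 + 1)%N,
        css_dim (GB_HX n a b) (GB_HZ n a b) = 2%N,
        css_min_distance (GB_HX n a b) (GB_HZ n a b) d,
        GB_regular24 n a b
      & d <> 3%N ->
        css_degenerate (GB_HX n a b) (GB_HZ n a b) d /\
        (4 < d)%N /\
        exists u v : 'rV['F_2]_(n + n),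
          [/\ css_in_stab (GB_HX n a b) (GB_HZ n a b) u v,
              (u != 0%R) || (v != 0%R) & pauli_wt u v = 4%N]].
Proof.
move=> d3 dodd.
have Hd : d = (d./2).*2.+1 by rewrite -{1}(odd_double_half d) dodd add1n.
move: (d./2) Hd => t Hd; subst d.
have t1 : (0 < t)%N by lia.
exists (t * t.*2.+1 + t).+1, (1 + 'X^1), (1 + 'X^(t.*2.+1)).
rewrite /GB_HX HZ_eq /GB_regular24 /GB_HX HZ_eq.
split.
- rewrite -addnn; move: (t * t.*2.+1)%N => P; nia.
- by rewrite /css_dim rankHX rankHZ; lia.
- split.
    exists (uW t), 0; split.
    + apply/andP; split; apply/eqP; first exact: HZ_uW t1.
      by apply/matrixP => i j; rewrite !mxE big1 // => k _; rewrite !mxE mulr0.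
    + by rewrite /css_in_stab negb_and uW_notin.
    + exact: pw_uW t1.
  move=> u v /andP [/eqP Hz /eqP Hx]; rewrite /css_in_stab negb_and => /orP [Hu|Hv].
    exact: (leq_trans (Xlow t1 Hz Hu) (pw_ge' u v)).
  exact: (leq_trans (Zlow Hx Hv) (pw_ge u v)).
- by split; [exact: regHX t1 | exact: regHZ t1].
move=> d3'.
have d5 : (4 < t.*2.+1)%N by lia.
have hw := (regHX t1).1 0.
have stab : css_in_stab (GB_mx (t * t.*2.+1 + t).+1 (1 + 'X^1) (1 + 'X^(t.*2.+1)))
   (GB_mx (t * t.*2.+1 + t).+1 (1 + 'X^((t * t.*2.+1 + t) * t.*2.+1))
      (1 + 'X^((t * t.*2.+1 + t) * 1))) (row 0 (GB_mx (t * t.*2.+1 + t).+1 (1 + 'X^1) (1 + 'X^(t.*2.+1)))) 0.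
  by rewrite /css_in_stab row_sub sub0mx.
split; last split => //.
  exists (row 0 (GB_mx (t * t.*2.+1 + t).+1 (1 + 'X^1) (1 + 'X^(t.*2.+1)))), 0.
  by split => //; [rewrite row_nz | rewrite pw_0 hw].
exists (row 0 (GB_mx (t * t.*2.+1 + t).+1 (1 + 'X^1) (1 + 'X^(t.*2.+1)))), 0.
by split => //; [rewrite row_nz | rewrite pw_0 hw].
Qed.
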